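(* Let $G$, $k\ge 3$, the choice strings $c_{i,j}$, the template string $t$, $L$ and $d$ be as in the binary construction in the context, and let $s\in\{0,1\}^L$ be a solution, i.e. $t$ and every choice string $c_{i,j}$ ($1\le i<j\le k$) have a substring of length $L$ at Hamming distance at most $d$ from $s$. Then every section of the encoding part of $s$ contains exactly one symbol $1$.
   Context: Let $G=(V,E)$ be an undirected simple graph with $V=\{v_1,\dots,v_n\}$ and edge set $E=\{e_1,\dots,e_m\}$, and let $k\ge 3$ be an integer; put $N=\binom{k}{2}$ and $b=nk-2k+2$. All strings are over $\{0,1\}$. For $1\le p\le n$ let $\mathrm{number}(p)=0^{p-1}10^{n-p}$. Let $\mathrm{front\_tag}=(1^{3nk}0)^{nk}$ (length $(3nk+1)nk$). Order the pairs $(i,j)$, $1\le i<j\le k$, lexicographically and let $i'$ be the position of $(i,j)$ in this order. For an edge $e$ joining $v_r,v_s$ with $r<s$ let $\mathrm{encode}(i,j,e)=(0^n)^{i-1}\,\mathrm{number}(r)\,(0^n)^{j-i-1}\,\mathrm{number}(s)\,(0^n)^{k-j}$, $\mathrm{back\_tag}(i')=0^{(i'-1)b}1^{b}0^{(N-i')b}$, and $\mathrm{block}(i,j,e)=\mathrm{front\_tag}\,\mathrm{encode}(i,j,e)\,\mathrm{back\_tag}(i')$. The choice string is $c_{i,j}=\mathrm{block}(i,j,e_1)\cdots\mathrm{block}(i,j,e_m)$. The template string is $t=\mathrm{front\_tag}\,1^{nk}\,0^{Nb}$. Set $L=(3nk+1)nk+nk+Nb$ and $d=nk-k$. For a string $s$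 of length $L$, its encoding part is the substring of its positions $(3nk+1)nk+1,\dots,(3nk+1)nk+nk$, divided into $k$ consecutive sections of length $n$. *)

(* Defs.v *)
From mathcomp Require Import all_boot.
Set Implicit Arguments. Unset Strict Implicit. Unset Printing Implicit Defensive.

Definition zeros (l : nat) : seq bool := nseq l false.
Definition ones (l : nat) : seq bool := nseq l true.

Definition number (n p : nat) : seq bool := zeros (p - 1) ++ true :: zeros (n - p).

Definition front_tag (n k : nat) : seq bool :=
  flatten (nseq (n * k) (ones (3 * n * k) ++ [:: false])).

Definition Npairs (k : nat) : nat := 'C(k, 2).
Definition bb (n k : nat) : nat := n * k - 2 * k + 2.

Definition pairs (k : nat) : seq (nat * nat) :=
  [seq (i, j) | i <- iota 1 k, j <- iota i.+1 (k - i)].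

Definition pair_pos (k i j : nat) : nat := (index (i, j) (pairs k)).+1.

(* An edge is a pair (r, s) of vertex indices with r < s (vertices v_1..v_n). *)
Definition encode (n k i j : nat) (e : nat * nat) : seq bool :=
  flatten (nseq (i - 1) (zeros n)) ++ number n e.1 ++
  flatten (nseq (j - i - 1) (zeros n)) ++ number n e.2 ++
  flatten (nseq (k - j) (zeros n)).

Definition back_tag (n k i' : nat) : seq bool :=
  zeros ((i' - 1) * bb n k) ++ ones (bb n k) ++ zeros ((Npairs k - i') * bb n k).

Definition block (n k i j : nat) (e : nat * nat) : seq bool :=
  front_tag n k ++ encode n k i j e ++ back_tag n k (pair_pos k i j).

Definition choice_string (n k : nat) (E : seq (nat * nat)) (i j : nat) : seq bool :=
  flatten [seq block n k i j e | e <- E].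

Definition template (n k : nat) : seq bool :=
  front_tag n k ++ ones (n * k) ++ zeros (Npairs k * bb n k).

Definition LL (n k : nat) : nat := (3 * n * k + 1) * (n * k) + n * k + Npairs k * bb n k.
Definition dd (n k : nat) : nat := n * k - k.

Definition hamming (u v : seq bool) : nat := count (fun xy => xy.1 != xy.2) (zip u v).

Definition close_substring (w s : seq bool) (D : nat) : Prop :=
  exists p, p + size s <= size w /\ hamming (take (size s) (drop p w)) s <= D.

Definition is_solution (n k : nat) (E : seq (nat * nat)) (s : seq bool) : Prop :=
  size s = LL n k /\
  close_substring (template n k) s (dd n k) /\
  (forall i j, 1 <= i -> i < j -> j <= k ->
     close_substring (choice_string n k E i j) s (dd n k)).

Definition simple_graph (n : nat) (E : seq (nat * nat)) : Prop :=
  uniq E /\ all (fun e => (1 <= e.1) && (e.1 < e.2) && (e.2 <= n)) E.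

(* section q (0-based, q < k) of the encoding part of s *)
Definition section (n k : nat) (s : seq bool) (q : nat) : seq bool :=
  take n (drop ((3 * n * k + 1) * (n * k) + q * n) s).

(* Main.v *)
Require Import Defs.
From mathcomp Require Import all_boot.
From mathcomp Require Import zify.
Require Import Defs.
Set Implicit Arguments. Unset Strict Implicit. Unset Printing Implicit Defensive.

Lemma sum_shift (f : nat -> nat) a l :
  \sum_(a <= i < a + l) f i = \sum_(0 <= i < l) f (a + i).
Proof.
rewrite -{1}(add0n a) big_addn addKn.
by apply: eq_bigr => i _; rewrite addnC.
Qed.

Lemma sum_split (f : nat -> nat) a l :
  \sum_(0 <= i < a + l) f i = \sum_(0 <= i < a) f i + \sum_(0 <= i < l) f (a + i).
Proof. rewrite (@big_cat_nat _ _ _ a 0 (a + l)) //=; last exact: leq_addr. by rewrite sum_shift. Qed.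

Lemma sum_sub (f : nat -> nat) a l T : a + l <= T ->
  \sum_(0 <= i < l) f (a + i) <= \sum_(0 <= i < T) f i.
Proof.
move=> h; rewrite -(subnKC h) sum_split sum_split.
lia.
Qed.

Lemma sum_eqM (c l M : nat) : \sum_(0 <= i < l) (c + i == M) <= 1.
Proof.
elim: l => [|l IH]; first by rewrite big_geq.
rewrite big_nat_recr //=.
case: (ltnP M (c + l)) => h.
  have -> : (c + l == M) = false by apply/negbTE; rewrite neq_ltn h orbT.
  by rewrite addn0.
have -> : \sum_(0 <= i < l) (c + i == M) = 0.
  rewrite big_nat_cond big1 // => i /andP[/andP[_ hi] _].
  by apply/eqP; rewrite eqb0 neq_ltn; apply/orP; left; lia.
by case: (c + l == M).
Qed.

Lemma sum_negb (g : nat -> bool) l :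
  \sum_(0 <= i < l) ~~ g i + \sum_(0 <= i < l) g i = l.
Proof.
rewrite -big_split /=.
rewrite (eq_bigr (fun _ => 1)); first by rewrite sum_nat_const_nat subn0 muln1.
by move=> i _; case: (g i).
Qed.

Lemma leq_sum_nat m n (f g : nat -> nat) :
  (forall i, m <= i < n -> f i <= g i) ->
  \sum_(m <= i < n) f i <= \sum_(m <= i < n) g i.
Proof.
move=> h; rewrite big_nat_cond [X in _ <= X]big_nat_cond.
by apply: leq_sum => i /andP[hi _]; exact: h.
Qed.

Lemma term_le_sum (f : nat -> nat) u K : u < K -> f u <= \sum_(0 <= i < K) f i.
Proof.
move=> h; have := @sum_sub f u 1 K (ltac:(lia)).
by rewrite big_nat1 addn0.
Qed.

Lemma modE y q r L : r < L -> y = q * L + r -> y %% L = r /\ y %/ L = q.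
Proof.
move=> hr ->; split; first by rewrite modnMDl modn_small.
have hL : 0 < L by lia.
by rewrite divnMDl // divn_small // addn0.
Qed.

Definition mis (C : nat -> bool) M y0 := \sum_(0 <= i < M.+1) (C (y0 + i) != (i != M)).

Lemma split_segments (f : nat -> nat) M K :
  \sum_(0 <= x < M.+1 * K) f x = \sum_(0 <= u < K) \sum_(0 <= i < M.+1) f (u * M.+1 + i).
Proof.
elim: K => [|K IH]; first by rewrite muln0 !big_geq.
rewrite mulnS addnC sum_split IH [in RHS]big_nat_recr //=; congr (_ + _).
by apply: eq_bigr => i _; rewrite mulnC.
Qed.

Lemma tail_mis (C : nat -> bool) M y0 a l W :
  y0 <= a -> a + l <= y0 + M.+1 -> \sum_(0 <= i < l) C (a + i) <= W ->
  l <= mis C M y0 + 1 + W.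
Proof.
move=> h1 h2 hW.
set c := a - y0.
have hs : \sum_(0 <= i < l) (C (y0 + (c + i)) != ((c + i) != M)) <= mis C M y0.
  rewrite /mis; apply: (@sum_sub (fun i => C (y0 + i) != (i != M)) c l M.+1); lia.
have hle : \sum_(0 <= i < l) ~~ C (a + i) <=
   \sum_(0 <= i < l) ((C (y0 + (c + i)) != ((c + i) != M)) + (c + i == M)).
  apply: leq_sum_nat => i _.
  have -> : y0 + (c + i) = a + i by rewrite /c; lia.
  by case: (C (a + i)); case: (c + i == M).
rewrite big_split /= in hle.
have := sum_eqM c l M.
have := sum_negb (fun i => C (a + i)) l.
lia.
Qed.

Lemma tail_sum (C : nat -> bool) a l b T W :
  b <= a -> a + l <= b + T -> \sum_(0 <= o < T) C (b + o) <= W ->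
  \sum_(0 <= i < l) C (a + i) <= W.
Proof.
move=> h1 h2 hW; apply: leq_trans hW.
have := @sum_sub (fun o => C (b + o)) (a - b) l T.
have -> : \sum_(0 <= i < l) C (b + (a - b + i)) = \sum_(0 <= i < l) C (a + i).
  by apply: eq_bigr => i _; congr (C _); lia.
move=> H; apply: H; lia.
Qed.

Lemma mis_misaligned (C : nat -> bool) M F L Y y0 :
  F < L ->
  (forall y, y < Y -> y %% L < F -> C y = (y %% L %% M.+1 != M)) ->
  y0 + M < Y -> y0 %% L + M < F -> y0 %% L %% M.+1 != 0 ->
  2 <= mis C M y0.
Proof.
move=> hFL HC hY hF hg.
set o0 := y0 %% L.
have hL : 0 < L by lia.
have hy0 : y0 = y0 %/ L * L + o0 by rewrite /o0 -divn_eq.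
have hCi : forall i, i <= M -> C (y0 + i) = ((o0 + i) %% M.+1 != M).
  move=> i hi.
  have [h1 _] := @modE (y0 + i) (y0 %/ L) (o0 + i) L (ltac:(lia)) (ltac:(lia)).
  by rewrite HC ?h1 //; lia.
set g := o0 %% M.+1.
have hgM : g < M.+1 by rewrite /g ltn_mod.
have ho0 : o0 = o0 %/ M.+1 * M.+1 + g by rewrite /g -divn_eq.
have hg0 : 0 < g by rewrite lt0n.
have e1 : (o0 + M) %% M.+1 = g - 1.
  by have [-> _] := @modE (o0 + M) (o0 %/ M.+1).+1 (g - 1) M.+1 (ltac:(lia)) (ltac:(rewrite mulSn; lia)).
have e2 : (o0 + (M - g)) %% M.+1 = M.
  by have [-> _] := @modE (o0 + (M - g)) (o0 %/ M.+1) M M.+1 (ltac:(lia)) (ltac:(lia)).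
rewrite /mis big_nat_recr //=.
have hM : (C (y0 + M) != (M != M)) = true.
  by rewrite hCi // e1 eqxx /=; apply/eqP; lia.
have hMg : (C (y0 + (M - g)) != (M - g != M)) = true.
  rewrite hCi ?e2 ?eqxx /=; last by lia.
  by apply/eqP; lia.
have := @sum_sub (fun i => C (y0 + i) != (i != M)) (M - g) 1 M (ltac:(lia)).
rewrite big_nat1 addn0 hMg hM /=.
lia.
Qed.

Lemma align (C : nat -> bool) M K L W D Y p :
  M.+1 * K < L ->
  (forall y, y < Y -> y %% L < M.+1 * K -> C y = (y %% L %% M.+1 != M)) ->
  (forall b, b * L + L <= Y ->
     \sum_(0 <= o < L - M.+1 * K) C (b * L + M.+1 * K + o) <= W) ->
  p + L <= Y ->
  D + W + 2 <= M.+1 -> D + W + 2 <= L - M.+1 * K -> D + 5 <= 2 * K ->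
  \sum_(0 <= u < K) mis C M (p + u * M.+1) <= D ->
  L %| p.
Proof.
move=> hFL HC HT hp H1 H2 H3 Hsum.
set F := M.+1 * K in hFL HC HT H2.
have hL : 0 < L by lia.
case: (boolP (L %| p)) => // hnd; exfalso.
have hmisD : forall u, u < K -> mis C M (p + u * M.+1) <= D.
  move=> u hu; apply: leq_trans Hsum; exact: (@term_le_sum (fun u => mis C M (p + u * M.+1))).
have segF : forall u, u < K -> u * M.+1 + M.+1 <= F.
  by move=> u hu; rewrite /F -mulSnr mulnC leq_mul2l hu orbT.
have tailC : forall u a l b, u < K -> p + u * M.+1 <= a -> a + l <= p + u * M.+1 + M.+1 ->
    b * L + F <= a -> a + l <= b * L + L -> b * L + L <= Y -> D + W + 2 <= l -> False.
  move=> u a l b hu h1 h2 h3 h4 h5 h6.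
  have := @tail_mis C M (p + u * M.+1) a l W h1 h2.
  have := @tail_sum C a l (b * L + F) (L - F) W h3 (ltac:(lia)) (HT b h5).
  move=> hs /(_ hs); have := hmisD u hu; lia.
have stepA : forall u, u < K -> F <= (p + u * M.+1) %% L -> (p + u * M.+1) %% L + M < L -> False.
  move=> u hu h1 h2.
  set y0 := p + u * M.+1 in h1 h2.
  have hy0 : y0 = y0 %/ L * L + y0 %% L by rewrite -divn_eq.
  have := segF u hu.
  move=> hs; apply: (tailC u y0 M.+1 (y0 %/ L) hu) => //; lia.
have stepB : forall u w, u < w -> w < K ->
    F <= (p + u * M.+1) %% L + M -> F <= (p + w * M.+1) %% L + M -> w <= u.+1.
  move=> u w huw hw hu' hw'.
  rewrite leqNgt; apply/negP => hlt.
  set y0 := p + u * M.+1 in hu'.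
  set o := y0 %% L in hu'.
  set b := y0 %/ L.
  have hy0 : y0 = b * L + o by rewrite /b /o -divn_eq.
  have ho : o < L by rewrite /o ltn_mod.
  set j := w - u.
  have hyw : p + w * M.+1 = y0 + j * M.+1 by rewrite /y0 /j -addnA -mulnDl; congr (_ + _ * _); lia.
  have hj2 : 2 * M.+1 <= j * M.+1 by rewrite leq_mul2r; apply/orP; right; rewrite /j; lia.
  have hjK : j * M.+1 + M.+1 <= F by rewrite /F -mulSnr mulnC leq_mul2l; apply/orP; right; rewrite /j; lia.
  rewrite hyw in hw'.
  have hu1 : p + u.+1 * M.+1 = y0 + M.+1 by rewrite mulSn /y0; lia.
  case: (ltnP (y0 + M.+1) (b * L + L)) => hc.
    have [e1 _] := @modE (y0 + M.+1) b (o + M.+1) L (ltac:(lia)) (ltac:(lia)).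
    case: (ltnP (o + M.+1 + M) L) => hc2.
      by apply: (stepA u.+1) => //; [lia | rewrite hu1 e1 | rewrite hu1 e1]; lia.
    have [e2 _] := @modE (y0 + j * M.+1) b.+1 (y0 + j * M.+1 - b.+1 * L) L
       (ltac:(rewrite mulSn; lia)) (ltac:(rewrite mulSn; lia)).
    by rewrite e2 mulSn in hw'; lia.
  have [e2 _] := @modE (y0 + j * M.+1) b.+1 (y0 + j * M.+1 - b.+1 * L) L
     (ltac:(rewrite mulSn; lia)) (ltac:(rewrite mulSn; lia)).
  by rewrite e2 mulSn in hw'; lia.
have stepC : forall u, u < K -> (p + u * M.+1) %% L + M < F ->
    (p + u * M.+1) %% L %% M.+1 = 0 -> False.
  move=> u hu hin hal.
  set y0 := p + u * M.+1 in hin hal.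
  set o := y0 %% L in hin hal.
  set b := y0 %/ L.
  have hy0 : y0 = b * L + o by rewrite /b /o -divn_eq.
  set v := o %/ M.+1.
  have hov : o = v * M.+1 by rewrite {1}(divn_eq o M.+1) hal addn0.
  have hvK : v < K.
    rewrite -(ltn_pmul2r (ltn0Sn M)) -hov mulnC; rewrite /F in hin; lia.
  case: (ltngtP u v) => huv.
  -
    set u' := K - v + u.
    have hu'K : u' < K by rewrite /u'; lia.
    have e : u' * M.+1 + v * M.+1 = F + u * M.+1.
      by rewrite -mulnDl /F [M.+1 * K]mulnC -mulnDl /u'; congr (_ * _); lia.
    have huv' : u * M.+1 < v * M.+1 by rewrite ltn_pmul2r.
    have hvF := segF v hvK.
    apply: (tailC u' (b * L + F) (minn (L - F) M.+1) b hu'K); lia.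
  -
    set u' := u - v - 1.
    have hu'K : u' < K by rewrite /u'; lia.
    have e : u' * M.+1 + M.+1 + v * M.+1 = u * M.+1.
      by rewrite -mulSnr -mulnDl /u'; congr (_ * _); lia.
    have hvu' : v * M.+1 < u * M.+1 by rewrite ltn_pmul2r.
    have huF := segF u hu.
    case: b hy0 => [|b'] hy0.
      by rewrite mul0n in hy0; lia.
    rewrite mulSn in hy0.
    apply: (tailC u' (b' * L + L - minn (L - F) M.+1) (minn (L - F) M.+1) b' hu'K); lia.
  -
    move: hnd; rewrite /y0 in hy0.
    have -> : p = b * L by subst v; lia.
    by rewrite dvdn_mull.
have good : exists u1, forall u, u < K -> u != u1 -> u != u1.+1 -> 2 <= mis C M (p + u * M.+1).
  case: (boolP [exists u : 'I_K, F <= (p + u * M.+1) %% L + M]) => hex.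
  - have exP : exists u, (u < K) && (F <= (p + u * M.+1) %% L + M).
      by case/existsP: hex => u hu; exists u; rewrite ltn_ord.
    case: (ex_minnP exP) => u1 /andP[hu1K hu1F] hmin.
    exists u1 => u hu hne1 hne2.
    case: (ltnP ((p + u * M.+1) %% L + M) F) => hin.
      apply: (@mis_misaligned C M F L Y) => //; first by have := segF u hu; lia.
      by apply/eqP => h0; exact: (stepC u hu hin h0).
    have := hmin u; rewrite hu hin => /(_ isT) hle.
    have hlt : u1 < u by rewrite ltn_neqAle eq_sym hne1 hle.
    have := stepB u1 u hlt hu hu1F hin.
    lia.
  - exists K => u hu _ _.
    case: (ltnP ((p + u * M.+1) %% L + M) F) => hin.
      apply: (@mis_misaligned C M F L Y) => //; first by have := segF u hu; lia.
      by apply/eqP => h0; exact: (stepC u hu hin h0).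
    move/existsP: hex => hex; exfalso; apply: hex; by exists (Ordinal hu).
case: good => u1 hgood.
have hsum2 : \sum_(0 <= u < K) 2 <=
   \sum_(0 <= u < K) (mis C M (p + u * M.+1) + ((0 + u == u1) * 2 + (0 + u == u1.+1) * 2)).
  apply: leq_sum_nat => u /andP[_ hu].
  rewrite !add0n.
  case: (eqVneq u u1) => [->|h1]; first by simpl; lia.
  case: (eqVneq u u1.+1) => [->|h2]; first by simpl; lia.
  by rewrite addn0; exact: hgood.
rewrite !big_split /= -!big_distrl /= sum_nat_const_nat subn0 in hsum2.
have := sum_eqM 0 K u1.
have := sum_eqM 0 K u1.+1.
lia.
Qed.


Lemma hamming_cons x y u v : hamming (x :: u) (y :: v) = (x != y) + hamming u v.
Proof. by []. Qed.

Lemma hamming_sum u v : size u = size v ->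
  hamming u v = \sum_(0 <= i < size u) (nth false u i != nth false v i).
Proof.
elim: u v => [|x u IH] [|y v] //=; first by rewrite big_geq.
move=> [] h; rewrite big_nat_recl // hamming_cons IH //.
Qed.

Lemma sum_nth_count u : \sum_(0 <= i < size u) nth false u i = count id u.
Proof.
elim: u => [|x u IH] /=; first by rewrite big_geq.
by rewrite big_nat_recl // IH.
Qed.

Lemma hamming_sym u v : hamming u v = hamming v u.
Proof.
elim: u v => [|x u IH] [|y v] //=.
by rewrite !hamming_cons IH eq_sym.
Qed.

Lemma hamming_tri u v w : size u = size v -> size v = size w ->
  hamming u w <= hamming u v + hamming v w.
Proof.
elim: u v w => [|x u IH] [|y v] [|z w] //= [] h1 [] h2.
rewrite !hamming_cons.
have := IH v w h1 h2.
by case: x; case: y; case: z => /=; lia.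
Qed.

Lemma hamming_cat u1 u2 v1 v2 : size u1 = size v1 ->
  hamming (u1 ++ u2) (v1 ++ v2) = hamming u1 v1 + hamming u2 v2.
Proof. by move=> h; rewrite /hamming zip_cat // count_cat. Qed.

Definition common (u v : seq bool) := count (fun xy => xy.1 && xy.2) (zip u v).

Lemma common_cons x y u v : common (x :: u) (y :: v) = (x && y) + common u v.
Proof. by []. Qed.

Lemma hamming_common u v : size u = size v ->
  hamming u v + 2 * common u v = count id u + count id v.
Proof.
elim: u v => [|x u IH] [|y v] //= [] h.
rewrite hamming_cons common_cons.
have := IH v h.
by case: x; case: y => /=; lia.
Qed.

Lemma common_nil_r u : common u [::] = 0.
Proof. by case: u. Qed.

Lemma common_le_l u v : common u v <= count id u.
Proof.
elim: u v => [|x u IH] [|y v] //=.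
rewrite common_cons; have := IH v.
by case: x; case: y => /=; lia.
Qed.

Lemma common_le_r u v : common u v <= count id v.
Proof.
elim: u v => [|x u IH] [|y v] //=.
rewrite common_cons; have := IH v.
by case: x; case: y => /=; lia.
Qed.

Lemma count0_nth u x : count id u = 0 -> nth false u x = false.
Proof.
elim: u x => [|a u IH] [|x] //=; first by case: a.
by case: a => //= h; rewrite IH.
Qed.

Lemma common_full_l u v : common u v = count id u ->
  forall x, nth false u x -> nth false v x.
Proof.
elim: u v => [|a u IH] [|b v] //=.
- by move=> h x; rewrite nth_nil.
- rewrite common_nil_r /= => h [|x] /=; first by case: a h.
  by move: h; case: a => //= h; rewrite count0_nth.
rewrite common_cons => h [|x] /=.
  have := common_le_l u v.
  by case: a h; case: b => //=; lia.
apply: IH.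
have := common_le_l u v.
by case: a h; case: b => //=; lia.
Qed.

Lemma common_full_r u v : common u v = count id v ->
  forall x, nth false v x -> nth false u x.
Proof.
move=> h; apply: (@common_full_l v u).
suff -> : common v u = common u v by [].
elim: u v {h} => [|a u IH] [|b v] //=.
by rewrite !common_cons IH andbC.
Qed.

Lemma hamming_ones m v : size v = m -> hamming (ones m) v = m - count id v.
Proof.
rewrite /ones; elim: m v => [|m IH] [|y v] //= [] h.
rewrite hamming_cons IH //.
have := count_size id v; rewrite h.
by case: y => /=; lia.
Qed.

Lemma hamming_zeros m v : size v = m -> hamming (zeros m) v = count id v.
Proof.
rewrite /zeros; elim: m v => [|m IH] [|y v] //= [] h.
by rewrite hamming_cons IH //; case: y.
Qed.

Lemma count_zeros m : count id (zeros m) = 0.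
Proof. by rewrite /zeros; elim: m. Qed.
Lemma count_ones m : count id (ones m) = m.
Proof. by rewrite /ones; elim: m => //= m ->. Qed.
Lemma size_zeros m : size (zeros m) = m.
Proof. by rewrite size_nseq. Qed.
Lemma size_ones m : size (ones m) = m.
Proof. by rewrite size_nseq. Qed.

Lemma size_flatten_nseq m (u : seq bool) : size (flatten (nseq m u)) = m * size u.
Proof. by elim: m => //= m IH; rewrite size_cat IH mulSn. Qed.

Lemma count_flatten_zeros m l : count id (flatten (nseq m (zeros l))) = 0.
Proof. by elim: m => //= m IH; rewrite count_cat IH count_zeros. Qed.

Lemma nth_flatten_nseq m (u : seq bool) x : x < m * size u ->
  nth false (flatten (nseq m u)) x = nth false u (x %% size u).
Proof.
elim: m x => [|m IH] x; first by rewrite mul0n.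
rewrite mulSn /= nth_cat => hx.
case: ltnP => h; first by rewrite modn_small.
rewrite IH; last by lia.
by rewrite -{2}(subnK h) modnDr.
Qed.

Lemma size_flatten_map (A : eqType) (f : A -> seq bool) (E : seq A) L :
  (forall e, e \in E -> size (f e) = L) -> size (flatten (map f E)) = size E * L.
Proof.
elim: E => [|e E IH] //= h.
rewrite size_cat h ?mem_head // IH ?mulSn // => e' he'.
by apply: h; rewrite in_cons he' orbT.
Qed.

Lemma nth_flatten_map (A : eqType) (f : A -> seq bool) (E : seq A) L e0 y :
  (forall e, e \in E -> size (f e) = L) -> y < size E * L ->
  nth false (flatten (map f E)) y = nth false (f (nth e0 E (y %/ L))) (y %% L).
Proof.
elim: E y => [|e E IH] y //= h hy.
have hE : forall e', e' \in E -> size (f e') = L.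
  by move=> e' he'; apply: h; rewrite in_cons he' orbT.
have he : size (f e) = L by apply: h; rewrite mem_head.
rewrite nth_cat he.
case: ltnP => hyL; first by rewrite divn_small // modn_small.
have hL : 0 < L by lia.
rewrite IH //; last by rewrite mulSn in hy; lia.
have hy' : y = 1 * L + (y - L) by lia.
rewrite {3 4}hy' divnMDl // modnMDl add1n //.
Qed.

Lemma window_flatten_map (A : eqType) (f : A -> seq bool) (E : seq A) L e0 b :
  (forall e, e \in E -> size (f e) = L) -> b < size E ->
  take L (drop (b * L) (flatten (map f E))) = f (nth e0 E b).
Proof.
elim: E b => [|e E IH] b //= h hb.
have hE : forall e', e' \in E -> size (f e') = L.
  by move=> e' he'; apply: h; rewrite in_cons he' orbT.
have he : size (f e) = L by apply: h; rewrite mem_head.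
case: b hb => [|b] hb.
  by rewrite mul0n drop0 take_cat he ltnn subnn take0 cats0.
by rewrite mulSn drop_cat he ltnNge leq_addr /= addKn IH.
Qed.


Lemma size_pairs k : size (pairs k) = Npairs k.
Proof.
rewrite /pairs size_allpairs_dep /Npairs.
have -> : [seq size (iota i.+1 (k - i)) | i <- iota 1 k] = [seq k - i | i <- iota 1 k].
  by apply: eq_map => i; rewrite size_iota.
elim: k => [|k IH] //.
rewrite -addn1 iotaD map_cat sumn_cat /= addn1 add1n subnn !addn0.
rewrite binS bin1 -IH.
have -> : [seq k.+1 - i | i <- iota 1 k] = [seq (k - i) + 1 | i <- iota 1 k].
  apply/eq_in_map => i; rewrite mem_iota => /andP[h1 h2]; lia.
have gen : forall l : seq nat, sumn [seq (k - i) + 1 | i <- l] = sumn [seq k - i | i <- l] + size l.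
  by elim=> //= a l ->; lia.
by rewrite gen size_iota addnC.
Qed.

Lemma pair_pos_bound k i j : 1 <= i -> i < j -> j <= k ->
  1 <= pair_pos k i j <= Npairs k.
Proof.
move=> h1 h2 h3; rewrite /pair_pos -size_pairs /=.
rewrite index_mem /pairs.
apply/allpairsPdep; exists i, j; split => //; rewrite mem_iota; lia.
Qed.

Lemma pair_pos12 k : 3 <= k -> pair_pos k 1 2 = 1.
Proof.
by case: k => [|[|[|k]]].
Qed.

Lemma pair_pos13 k : 3 <= k -> pair_pos k 1 3 = 2.
Proof.
by case: k => [|[|[|k]]].
Qed.

Lemma size_front n k : size (front_tag n k) = (3 * n * k).+1 * (n * k).
Proof.
by rewrite /front_tag size_flatten_nseq size_cat size_ones /= addn1 mulnC.
Qed.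

Lemma nth_front n k x : x < (3 * n * k).+1 * (n * k) ->
  nth false (front_tag n k) x = (x %% (3 * n * k).+1 != 3 * n * k).
Proof.
move=> hx; rewrite /front_tag nth_flatten_nseq; last first.
  by rewrite size_cat size_ones /= addn1 mulnC.
rewrite size_cat size_ones /= addn1 nth_cat size_ones.
have := ltn_pmod x (ltn0Sn (3 * n * k)).
move=> h2; case: (ltnP (x %% (3 * n * k).+1) (3 * n * k)) => h1.
  by rewrite /ones nth_nseq h1; apply/esym/eqP; lia.
have -> : x %% (3 * n * k).+1 = 3 * n * k by lia.
by rewrite subnn eqxx.
Qed.

Lemma size_number n p : 1 <= p <= n -> size (number n p) = n.
Proof. by move=> h; rewrite /number size_cat /= !size_zeros; lia. Qed.

Lemma count_number n p : count id (number n p) = 1.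
Proof. by rewrite /number count_cat /= !count_zeros. Qed.

Lemma nth_number n p : 1 <= p -> nth false (number n p) (p - 1) = true.
Proof. by move=> h; rewrite /number nth_cat size_zeros ltnn subnn. Qed.

Definition valid_edge n (e : nat * nat) := (1 <= e.1) && (e.1 < e.2) && (e.2 <= n).

Lemma size_encode n k i j e : 1 <= i -> i < j -> j <= k -> valid_edge n e ->
  size (encode n k i j e) = n * k.
Proof.
move=> h1 h2 h3 /andP[/andP[he1 he2] he3].
rewrite /encode !size_cat !size_flatten_nseq !size_zeros /= !size_zeros.
have hk : (i - 1) + 1 + (j - i - 1) + 1 + (k - j) = k by lia.
rewrite -[in RHS]hk !mulnDr; lia.
Qed.

Lemma count_encode n k i j e : count id (encode n k i j e) = 2.
Proof. by rewrite /encode !count_cat !count_flatten_zeros /= !count_zeros. Qed.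

Lemma nth_encode1 n k i j e : 1 <= i -> valid_edge n e ->
  nth false (encode n k i j e) ((i - 1) * n + (e.1 - 1)) = true.
Proof.
move=> h1 /andP[/andP[he1 he2] he3].
rewrite /encode nth_cat size_flatten_nseq size_zeros ltnNge leq_addr /= addKn.
rewrite nth_cat size_number; last by lia.
have -> : e.1 - 1 < n by lia.
exact: nth_number.
Qed.

Lemma nth_encode2 n k i j e : 1 <= i -> i < j -> valid_edge n e ->
  nth false (encode n k i j e) ((j - 1) * n + (e.2 - 1)) = true.
Proof.
move=> h1 h2 /andP[/andP[he1 he2] he3].
have -> : (j - 1) * n + (e.2 - 1) = (i - 1) * n + (n + ((j - i - 1) * n + (e.2 - 1))).
  have -> : j - 1 = (i - 1) + 1 + (j - i - 1) by lia.
  rewrite !mulnDl; lia.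
rewrite /encode nth_cat size_flatten_nseq size_zeros ltnNge leq_addr /= addKn.
rewrite nth_cat size_number; last by lia.
rewrite ltnNge leq_addr /= addKn.
rewrite nth_cat size_flatten_nseq size_zeros ltnNge leq_addr /= addKn.
rewrite nth_cat size_number; last by lia.
have -> : e.2 - 1 < n by lia.
apply: nth_number; lia.
Qed.

Lemma size_back n k i' : 1 <= i' <= Npairs k -> size (back_tag n k i') = Npairs k * bb n k.
Proof.
move=> h; rewrite /back_tag !size_cat !size_zeros size_ones.
have hN : (i' - 1) + 1 + (Npairs k - i') = Npairs k by lia.
rewrite -[in RHS]hN !mulnDl; lia.
Qed.

Lemma count_back n k i' : count id (back_tag n k i') = bb n k.
Proof. by rewrite /back_tag !count_cat !count_zeros count_ones addn0. Qed.

Lemma back_disjoint n k x :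
  nth false (back_tag n k 1) x -> nth false (back_tag n k 2) x -> False.
Proof.
rewrite /back_tag !nth_cat /= !size_zeros !size_ones subn0 mul1n.
rewrite /ones /zeros !nth_nseq.
case: (ltnP x (bb n k)) => hx1 //=; first by rewrite if_same.
Qed.


Lemma LLE n k : LL n k = (3 * n * k).+1 * (n * k) + (n * k + Npairs k * bb n k).
Proof. by rewrite /LL addn1 addnA. Qed.

Lemma size_block n k i j e : 1 <= i -> i < j -> j <= k -> valid_edge n e ->
  size (block n k i j e) = LL n k.
Proof.
move=> h1 h2 h3 he.
rewrite /block size_cat size_front size_cat size_encode // size_back ?LLE //.
exact: pair_pos_bound.
Qed.

Lemma size_template n k : size (template n k) = LL n k.
Proof. by rewrite /template size_cat size_front size_cat size_ones size_zeros LLE. Qed.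

Lemma nthb_pos u x : x < size u -> nth false u x -> 0 < count id u.
Proof.
elim: u x => [|a u IH] [|x] //=; first by move=> _ ->.
move=> hx hn; have := IH x hx hn; lia.
Qed.

Lemma count_sections n k x : size x = k * n ->
  count id x = \sum_(0 <= q < k) count id (take n (drop (q * n) x)).
Proof.
elim: k x => [|k IH] x hx.
  by rewrite big_geq //; move: hx; rewrite mul0n => /size0nil ->.
rewrite big_nat_recl // mul0n drop0 -{1}(cat_take_drop n x) count_cat.
congr (_ + _); rewrite IH; last by rewrite size_drop hx mulSn; lia.
by apply: eq_bigr => q _; rewrite drop_drop mulSn addnC.
Qed.

Lemma sum_all_one (f : nat -> nat) k q : (forall q, q < k -> 1 <= f q) ->
  \sum_(0 <= q < k) f q = k -> q < k -> f q = 1.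
Proof.
move=> h hs hq.
have e : \sum_(0 <= q < k) f q = \sum_(0 <= q < k) (1 + (f q - 1)).
  by apply: eq_big_nat => i /andP[_ hi]; have := h i hi; lia.
rewrite e big_split /= sum_nat_const_nat subn0 muln1 in hs.
have := @term_le_sum (fun q => f q - 1) q k hq.
have := h q hq; lia.
Qed.

Lemma window_block n k E s i j :
  simple_graph n E -> 3 <= k -> 2 <= n -> size s = LL n k ->
  hamming (template n k) s <= dd n k ->
  1 <= i -> i < j -> j <= k ->
  close_substring (choice_string n k E i j) s (dd n k) ->
  exists2 e, e \in E & hamming (block n k i j e) s <= dd n k.
Proof.
move=> [_ hall] hk hn hs ht h1 h2 h3 [p [hp hh]].
have hval : forall e, e \in E -> valid_edge n e by move=> e he; exact: (allP hall e he).
have hsz : forall e, e \in E -> size (block n k i j e) = LL n k.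
  by move=> e he; apply: size_block => //; exact: hval.
have hc : size (choice_string n k E i j) = size E * LL n k by apply: size_flatten_map.
rewrite hs in hp hh.
set L := LL n k in hs hp hh hsz hc.
set c := choice_string n k E i j in hp hh hc.
set w := take L (drop p c) in hh.
have hw : size w = L by rewrite size_takel // size_drop; lia.
have hst : size (template n k) = L by rewrite size_template.
have hwt : hamming w (template n k) <= 2 * dd n k.
  have := @hamming_tri w s (template n k) (ltac:(lia)) (ltac:(lia)).
  rewrite (hamming_sym s); lia.
have hKk : 2 * k <= n * k by rewrite leq_mul2r hn orbT.
have hN3 : 3 <= Npairs k.
  by rewrite /Npairs; apply: (leq_trans _ (leq_bin2l 2 hk)).
have hNb : 3 * bb n k <= Npairs k * bb n k by rewrite leq_mul2r hN3 orbT.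
have hb : bb n k = n * k - 2 * k + 2 by [].
have hd : dd n k = n * k - k by [].
have hLv : L = (3 * n * k).+1 * (n * k) + (n * k + Npairs k * bb n k) by apply: LLE.
set F := (3 * n * k).+1 * (n * k) in hLv.
have hL0 : 0 < L by lia.
have hdiv : L %| p.
  apply: (@align (fun y => nth false c y) (3 * n * k) (n * k) L (2 + bb n k) (2 * dd n k) (size c) p).
  - lia.
  - move=> y hy hyF.
    rewrite /c (nth_flatten_map (0, 0) hsz); last by rewrite -hc.
    by rewrite /block nth_cat size_front hyF nth_front.
  - move=> b0 hb0.
    have hbE : b0 < size E.
      by rewrite -(ltn_pmul2r hL0) -hc; lia.
    set e := nth (0, 0) E b0.
    have he : e \in E by apply: mem_nth.
    have hse : size (encode n k i j e ++ back_tag n k (pair_pos k i j)) = L - F.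
      by have := hsz e he; rewrite /block size_cat size_front -/F; lia.
    have hcnt : count id (encode n k i j e ++ back_tag n k (pair_pos k i j)) = 2 + bb n k.
      by rewrite count_cat count_encode count_back.
    rewrite -hcnt -sum_nth_count hse leq_eqVlt; apply/orP; left; apply/eqP.
    apply: eq_big_nat => o /andP[_ ho].
    rewrite /c (nth_flatten_map (0, 0) hsz); last by rewrite -hc; lia.
    have [-> ->] := @modE (b0 * L + F + o) b0 (F + o) L (ltac:(lia)) (ltac:(lia)).
    by rewrite -/e /block nth_cat size_front -/F ltnNge leq_addr /= addKn.
  - by [].
  - lia.
  - lia.
  - lia.
  - have e1 := @hamming_sum w (template n k) (ltac:(lia)).
    apply: leq_trans hwt; rewrite e1 hw.
    have := @sum_sub (fun x => nth false w x != nth false (template n k) x) 0 F L (ltac:(lia)).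
    apply: leq_trans.
    rewrite -/F [X in _ <= X](@split_segments _ (3 * n * k) (n * k)) -/F.
    rewrite leq_eqVlt; apply/orP; left; apply/eqP.
    apply: eq_big_nat => u /andP[_ hu].
    rewrite /mis; apply: eq_big_nat => x /andP[_ hx].
    have hxF : u * (3 * n * k).+1 + x < F.
      have : u.+1 * (3 * n * k).+1 <= F by rewrite /F mulnC leq_mul2l hu orbT.
      rewrite mulSn; lia.
    rewrite add0n /w nth_take; last by lia.
    rewrite nth_drop /template nth_cat size_front -/F hxF nth_front //.
    have [-> _] := @modE (u * (3 * n * k).+1 + x) u x (3 * n * k).+1 hx erefl.
    by rewrite addnA.
have hbE : p %/ L < size E.
  by rewrite -(ltn_pmul2r hL0) divnK // -hc; lia.
exists (nth (0, 0) E (p %/ L)); first by apply: mem_nth.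
by rewrite -(window_flatten_map (0, 0) hsz hbE) divnK.
Qed.


Theorem lemma5 (n k : nat) (E : seq (nat * nat)) (s : seq bool) :
  simple_graph n E -> 3 <= k -> is_solution n k E s ->
  forall q, q < k -> count id (section n k s q) = 1.
Proof.
move=> hG hk [hs [ht hc]] q hq.
have hN3 : 3 <= Npairs k.
  by rewrite /Npairs; apply: (leq_trans _ (leq_bin2l 2 hk)).
have hb : bb n k = n * k - 2 * k + 2 by [].
have hd : dd n k = n * k - k by [].
have hNb : 3 * bb n k <= Npairs k * bb n k by rewrite leq_mul2r hN3 orbT.
have hLv := LLE n k.
set F := (3 * n * k).+1 * (n * k) in hLv.
have [e0 he0] : exists e, e \in E.
  case: E hG hc => [|e E'] hG hc; last by exists e; rewrite mem_head.
  exfalso; have [p [hp _]] := hc 1 2 (erefl) (erefl) (ltac:(lia)).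
  by rewrite hs /choice_string /= in hp; lia.
have hn : 2 <= n.
  by case: hG => _ /allP /(_ e0 he0) /andP[/andP[]]; lia.
have hKk : 2 * k <= n * k by rewrite leq_mul2r hn orbT.
have ht' : hamming (template n k) s <= dd n k.
  case: ht => p [hp hh]; rewrite size_template hs in hp.
  have p0 : p = 0 by lia.
  by move: hh; rewrite p0 drop0 hs -(size_template n k) take_size.
set sF := take F s.
set sE := take (n * k) (drop F s).
set sB := drop (F + n * k) s.
have hsplit : s = sF ++ (sE ++ sB).
  rewrite /sF /sE /sB -{1}(cat_take_drop F s); congr (_ ++ _).
  by rewrite -{1}(cat_take_drop (n * k) (drop F s)) drop_drop addnC.
have hsF : size sF = F by rewrite size_takel // hs; lia.
have hsE : size sE = n * k by rewrite size_takel // size_drop hs; lia.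
have hsB : size sB = Npairs k * bb n k by rewrite /sB size_drop hs; lia.
have htdec : hamming (template n k) s = hamming (front_tag n k) sF +
    ((n * k - count id sE) + count id sB).
  rewrite {1}hsplit /template hamming_cat ?size_front // hamming_cat ?size_ones //.
  by rewrite hamming_ones // hamming_zeros.
have pairf : forall i j, 1 <= i -> i < j -> j <= k ->
   exists2 e, e \in E &
     [/\ common (encode n k i j e) sE = 2,
         common (back_tag n k (pair_pos k i j)) sB = count id sB &
         count id sE = k + count id sB].
  move=> i j h1 h2 h3.
  have [e he hh] := window_block hG hk hn hs ht' h1 h2 h3 (hc i j h1 h2 h3).
  exists e => //.
  have hv : valid_edge n e by case: hG => _ /allP /(_ e he).
  have hse := size_encode h1 h2 h3 hv.
  have hsb := size_back n (pair_pos_bound h1 h2 h3).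
  move: hh; rewrite {1}hsplit /block hamming_cat ?size_front // hamming_cat ?hse //.
  have := hamming_common (u:=encode n k i j e) (v:=sE) (ltac:(lia)).
  have := hamming_common (u:=back_tag n k (pair_pos k i j)) (v:=sB) (ltac:(lia)).
  rewrite count_encode count_back.
  have := common_le_l (encode n k i j e) sE; rewrite count_encode.
  have := common_le_r (back_tag n k (pair_pos k i j)) sB.
  have := count_size id sE; rewrite hsE.
  move: ht'; rewrite htdec.
  move=> *; split; lia.
have hO : count id sB = 0.
  have [e12 _ [_ c12 _]] := pairf 1 2 erefl erefl (ltac:(lia)).
  have [e13 _ [_ c13 _]] := pairf 1 3 erefl erefl hk.
  rewrite pair_pos12 // in c12; rewrite pair_pos13 // in c13.
  rewrite -sum_nth_count big1 // => x _.
  case hx: (nth false sB x) => //.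
  exfalso; apply: (@back_disjoint n k x).
  - exact: (common_full_r c12).
  - exact: (common_full_r c13).
have hcs : count id sE = k.
  by have [e12 _ [_ _ ->]] := pairf 1 2 erefl erefl (ltac:(lia)); rewrite hO addn0.
have hsec : forall q, q < k -> section n k s q = take n (drop (q * n) sE).
  move=> q' hq'.
  have hle : n + q' * n <= n * k.
    by rewrite -mulSn mulnC leq_mul2l hq' orbT.
  rewrite /section addn1 -/F /sE [RHS]take_drop take_takel // -take_drop drop_drop.
  by rewrite addnC.
rewrite hsec //.
apply: (@sum_all_one (fun q => count id (take n (drop (q * n) sE))) k q) => //.
  move=> q' hq'.
  have hsz : size (take n (drop (q' * n) sE)) = n.
    rewrite size_takel // size_drop hsE.
    have : q'.+1 * n <= k * n by rewrite leq_mul2r hq' orbT.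
    rewrite mulSn; lia.
  case: q' hq' hsz => [|q'] hq' hsz.
    have [[r t] he [ce _ _]] := pairf 1 2 erefl erefl (ltac:(lia)).
    set e := (r, t) in he ce.
    have hv : valid_edge n e by case: hG => _ /allP /(_ e he).
    have hsub := common_full_l (etrans ce (esym (count_encode n k 1 2 e))).
    have := hsub _ (nth_encode1 k 2 (erefl : 1 <= 1) hv).
    rewrite subnn mul0n add0n => hx.
    apply: (@nthb_pos _ (e.1 - 1)).
      by rewrite hsz; case/andP: hv => /andP[a1 a2] a3 /=; rewrite /= in a1 a2 a3; lia.
    by rewrite nth_take ?nth_drop ?mul0n ?add0n //; case/andP: hv => /andP[a1 a2] a3 /=; rewrite /= in a1 a2 a3; lia.
  have [[r t] he [ce _ _]] := pairf 1 q'.+2 erefl (ltac:(lia)) hq'.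
  set e := (r, t) in he ce.
  have hv : valid_edge n e by case: hG => _ /allP /(_ e he).
  have hsub := common_full_l (etrans ce (esym (count_encode n k 1 q'.+2 e))).
  have := hsub _ (nth_encode2 k (erefl : 1 <= 1) (ltac:(lia) : 1 < q'.+2) hv).
  have -> : q'.+2 - 1 = q'.+1 by lia.
  move=> hx.
  apply: (@nthb_pos _ (e.2 - 1)).
    by rewrite hsz; case/andP: hv => /andP[a1 a2] a3 /=; rewrite /= in a1 a2 a3; lia.
  by rewrite nth_take ?nth_drop //; case/andP: hv => /andP[a1 a2] a3 /=; rewrite /= in a1 a2 a3; lia.
rewrite -count_sections // hsE mulnC //.
Qed.
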